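(* Let $p$ be a prime, $m\ge0$ an integer, and $r,s,s'$ positive integers with $r\leq \min\{s,s',p^m\}$. (a) (Periodicity) If $s\equiv s'\pmod{p^m}$, then $\varepsilon(r,s,p)=\varepsilon(r,s',p)$. (b) (Duality) If $s'\equiv -s\pmod{p^m}$, then $\varepsilon(r,s',p)$ is the negative reverse of $\varepsilon(r,s,p)$, i.e. if $\varepsilon(r,s,p)=(\varepsilon_1,\dots,\varepsilon_r)$ then $\varepsilon(r,s',p)=(-\varepsilon_r,\dots,-\varepsilon_2,-\varepsilon_1)$.
   Context: For a positive integer $n$, let $J_n$ denote the $n\times n$ matrix with $1$s in positions $(i,i)$ for $1\le i\le n$ and $(i,i+1)$ for $1\le i<n$, and $0$s elsewhere. For $1\le r\le s$ and a field $F$ of characteristic $p$, the Jordan canonical form of $J_r\otimes J_s$ over $F$ is $J_{\lambda_1}\oplus\cdots\oplus J_{\lambda_r}$ with $\lambda_1\ge\cdots\ge\lambda_r>0$; write $\lambda(r,s,p)=(\lambda_1,\dots,\lambda_r)$ (depending only on $r,s,p$). The deviation vector is $\varepsilon(r,s,p)=(\lambda_1-s,\dots,\lambda_r-s)$. *)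

(* Defs.v *)
From HB Require Import structures.
From mathcomp Require Import all_boot all_order all_algebra.
From mathcomp Require Import mxtens.
Set Implicit Arguments. Unset Strict Implicit. Unset Printing Implicit Defensive.
Import Order.TTheory GRing.Theory Num.Theory.
Local Open Scope ring_scope.

Definition jordan_block (F : fieldType) (n : nat) : 'M[F]_n :=
  \matrix_(i < n, j < n) (((i == j :> nat) || (j == i.+1 :> nat))%:R : F).

(* Similarity is expressed with a (necessarily square) invertible matrix P,
   i.e. row_free and row_full, with P (J_r (x) J_s) = D P. *)
Definition is_jcf_tens (F : fieldType) (r s : nat) (lam : 'I_r -> nat) : Prop :=
  [/\ (forall i j : 'I_r, (i <= j)%N -> (lam j <= lam i)%N),
      (forall i : 'I_r, (0 < lam i)%N) &
      exists P : 'M[F]_(\sum_(i < r) lam i, r * s),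
        [/\ row_free P, row_full P &
            P *m (jordan_block F r *t jordan_block F s)
            = (\mxdiag_(i < r) jordan_block F (lam i)) *m P]].

Definition deviation (r s : nat) (lam : 'I_r -> nat) (i : 'I_r) : int :=
  (lam i)%:Z - s%:Z.
Arguments deviation : clear implicits.
Arguments is_jcf_tens : clear implicits.

(* Main.v *)
Require Import Defs.
From HB Require Import structures.
From mathcomp Require Import all_boot all_order all_algebra.
From mathcomp Require Import mxtens.
Import Order.TTheory GRing.Theory Num.Theory.
From mathcomp Require Import zify.

Section Mx.
Variable F : fieldType.
Local Open Scope ring_scope.

Definition shm (a m n : nat) : 'M[F]_(m, n) := \matrix_(i, j) ((j == (i + a)%N :> nat)%:R).

Lemma sum_delta_in n (x : 'I_n) (f : 'I_n -> F) :
  \sum_(k < n) (((k : nat) == x)%:R * f k) = f x.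
Proof.
rewrite (bigD1 x) //= eqxx mul1r big1 ?addr0 // => k nk.
case: eqP => [e|]; last by rewrite mul0r.
by case/eqP: nk; apply: val_inj.
Qed.

Lemma sum_delta_out n x (f : 'I_n -> F) : (n <= x)%N ->
  \sum_(k < n) (((k : nat) == x)%:R * f k) = 0.
Proof.
move=> h; rewrite big1 // => k _; case: eqP => [e|]; last by rewrite mul0r.
by move: (ltn_ord k); rewrite e ltnNge h.
Qed.

Lemma shm_mul a b m n l : ((l <= n + b) || (m + a <= n))%N ->
  shm a m n *m shm b n l = shm (a + b) m l.
Proof.
move=> H; apply/matrixP => i j; rewrite /shm !mxE.
under eq_bigr do rewrite !mxE.
case: (ltnP (i + a) n) => h.
  rewrite (_ : (i + a)%N = Ordinal h) // sum_delta_in.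
  by rewrite /= addnA.
rewrite sum_delta_out //.
case: eqP => // e; exfalso.
case/orP: H => H.
  by move: (ltn_ord j); rewrite e addnA; move: H h; clear; lia.
by move: (ltn_ord i) H h; clear; lia.
Qed.

Lemma shm0 n : shm 0 n n = 1%:M.
Proof.
apply/matrixP => i j; rewrite /shm !mxE addn0.
by rewrite eq_sym.
Qed.

Lemma shm_big a m n : (n <= a)%N -> shm a m n = 0.
Proof.
move=> h; apply/matrixP => i j; rewrite /shm !mxE.
case: eqP => // e; move: (ltn_ord j); rewrite e; move: h; clear; lia.
Qed.

Definition Bsh n := shm 1 n n.

Lemma Bsh_pow n c : Bsh n ^+ c = shm c n n.
Proof.
elim: c => [|c IH]; first by rewrite expr0 shm0.
by rewrite exprSr IH -mulmxE /Bsh shm_mul ?leq_addr // addn1.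
Qed.

Lemma jbE n : jordan_block F n = 1%:M + Bsh n.
Proof.
apply/matrixP => i j; rewrite /Bsh /shm !mxE.
case: (i =P j) => [->|nij].
  rewrite eqxx /= addn1.
  have -> : (nat_of_ord j == j.+1) = false by apply/negbTE; rewrite neq_ltn ltnSn.
  by rewrite addr0.
rewrite /= add0r addn1; congr (_%:R).
have -> : (nat_of_ord i == nat_of_ord j) = false.
  by apply/negbTE; apply/eqP => e; apply: nij; apply: val_inj.
by [].
Qed.

Lemma rowfree_rinv m n (A : 'M[F]_(m, n)) (B : 'M_(n, m)) :
  A *m B = 1%:M -> row_free A.
Proof.
move=> e; rewrite /row_free eqn_leq rank_leq_row /=.
by rewrite -{1}(mxrank1 F m) -e mxrankM_maxl.
Qed.

Lemma rowfull_linv m n (A : 'M[F]_(m, n)) (B : 'M_(n, m)) :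
  B *m A = 1%:M -> row_full A.
Proof.
move=> e; rewrite /row_full eqn_leq rank_leq_col /=.
by rewrite -{1}(mxrank1 F n) -e mxrankM_maxr.
Qed.

Definition shmT (a m n : nat) : 'M[F]_(m, n) := \matrix_(i, j) ((i == (j + a)%N :> nat)%:R).

Lemma shm_rinv a b m : (b + a <= m)%N -> shm a b m *m shmT a m b = 1%:M.
Proof.
move=> H; apply/matrixP => i j; rewrite /shm /shmT !mxE.
under eq_bigr do rewrite !mxE.
case: (ltnP (i + a) m) => h.
  rewrite (_ : (i + a)%N = Ordinal h) // sum_delta_in.
  by rewrite /= eqn_add2r.
rewrite sum_delta_out //.
by exfalso; move: (ltn_ord i) H h; clear; lia.
Qed.

Lemma shm_linv m b : (b <= m)%N -> shm 0 b m *m shm 0 m b = 1%:M.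
Proof. by move=> H; rewrite shm_mul ?addn0 ?H ?shm0. Qed.

Lemma tensmxDl m n p q (A B : 'M[F]_(m, n)) (C : 'M[F]_(p, q)) :
  (A + B) *t C = A *t C + B *t C.
Proof. by apply/matrixP => i j; rewrite !mxE mulrDl. Qed.

Lemma tensmxDr m n p q (A : 'M[F]_(m, n)) (B C : 'M[F]_(p, q)) :
  A *t (B + C) = A *t B + A *t C.
Proof. by apply/matrixP => i j; rewrite !mxE mulrDr. Qed.

Lemma tens11 m n : (1%:M : 'M[F]_m) *t (1%:M : 'M[F]_n) = 1%:M.
Proof.
apply/matrixP => i j.
case: (mxtens_indexP i) => i0 i1; case: (mxtens_indexP j) => j0 j1.
rewrite tensmxE !mxE (can_eq (@mxtens_indexK _ _)) xpair_eqE.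
by case: (i0 == j0); case: (i1 == j1); rewrite ?mulr1 ?mulr0 ?mul0r.
Qed.


End Mx.

Section Mx2.
Variable F : fieldType.
Local Open Scope ring_scope.
Lemma frobp (p N : nat) (Y : 'M[F]_N) : p \in [pchar F] ->
  (1 + Y) ^+ p = 1 + Y ^+ p.
Proof.
move=> hp; have pp : prime p by apply: (pcharf_prime hp).
have p0 : (0 < p)%N by apply: prime_gt0.
rewrite addrC exprD1n (bigD1 ord_max) //= (bigD1 ord0) //=; last first.
  by apply/eqP => /(congr1 val) /= e; move: p0; rewrite -e.
rewrite big1 ?addr0; first by rewrite binn bin0 expr0 !mulr1n addrC.
move=> i /andP [ni1 ni0]; rewrite -scaler_nat bin_lt_pcharf_0 ?scale0r //.
apply/andP; split.
  by rewrite lt0n; move: ni0; apply: contra => /eqP e; apply/eqP/val_inj.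
rewrite ltn_neqAle -ltnS ltn_ord andbT.
by move: ni1; apply: contra => /eqP e; apply/eqP/val_inj.
Qed.
Lemma frob (p m N : nat) (Y : 'M[F]_N) : p \in [pchar F] ->
  (1 + Y) ^+ (p ^ m) = 1 + Y ^+ (p ^ m).
Proof.
move=> hp; elim: m => [|m IH]; first by rewrite !expn0 !expr1.
by rewrite expnSr !exprM IH frobp.
Qed.

Lemma tens_pow m n (A : 'M[F]_m) (B : 'M[F]_n) k :
  (A *t B) ^+ k = (A ^+ k) *t (B ^+ k).
Proof.
elim: k => [|k IH]; first by rewrite !expr0 tens11.
by rewrite !exprSr -!mulmxE IH tensmx_mul.
Qed.

Lemma mxdiag_mul p (p_ : 'I_p -> nat) (A B : forall i, 'M[F]_(p_ i)) :
  \mxdiag_i A i *m \mxdiag_i B i = \mxdiag_i (A i *m B i).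
Proof.
rewrite {2}/mxdiag mul_mxdiag_mxblock /mxdiag; apply/eq_mxblock => i j.
by case: eqVneq => [<-|_]; rewrite ?mulmx0 // !conform_mx_id.
Qed.

Lemma mxdiag_pow p (p_ : 'I_p -> nat) (B : forall i, 'M[F]_(p_ i)) k :
  (\mxdiag_i B i) ^+ k = \mxdiag_i (B i ^+ k).
Proof.
elim: k => [|k IH].
  by rewrite expr0; under eq_mxdiag do rewrite expr0; rewrite mxdiagZ.
by rewrite exprSr IH -mulmxE mxdiag_mul; apply: eq_mxdiag => i; rewrite exprSr mulmxE.
Qed.

Lemma rank_shm c n : \rank (shm F c n n) = (n - c)%N.
Proof.
case: (leqP c n) => h; last by rewrite shm_big ?mxrank0 ?(ltnW h) //; move: h; clear; lia.
have -> : shm F c n n = shm F 0 n (n - c) *m shm F c (n - c) n.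
  by rewrite shm_mul ?add0n // subnK ?leqnn.
rewrite (eqmxMfull _ (rowfull_linv F _ _ _ _ (shm_linv F _ _ (leq_subr c n)))).
apply/eqP; apply: (@rowfree_rinv _ _ _ _ (shmT F c n (n - c))).
by rewrite shm_rinv // subnK.
Qed.

Lemma rank_tens_shm rr c n : \rank ((1%:M : 'M[F]_rr) *t shm F c n n) = (rr * (n - c))%N.
Proof.
case: (leqP c n) => h; last first.
  by rewrite shm_big ?tensmx0 ?mxrank0 ?(ltnW h) //; move: h; clear; nia.
have -> : shm F c n n = shm F 0 n (n - c) *m shm F c (n - c) n.
  by rewrite shm_mul ?add0n // subnK ?leqnn.
have -> : (1%:M : 'M[F]_rr) *t (shm F 0 n (n - c) *m shm F c (n - c) n) =
   (1%:M *t shm F 0 n (n - c)) *m (1%:M *t shm F c (n - c) n).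
  by rewrite tensmx_mul mulmx1.
have fl : row_full ((1%:M : 'M[F]_rr) *t shm F 0 n (n - c)).
  apply: (@rowfull_linv _ _ _ _ ((1%:M : 'M[F]_rr) *t shm F 0 (n - c) n)).
  by rewrite tensmx_mul mulmx1 shm_linv ?leq_subr // tens11.
rewrite (eqmxMfull _ fl).
apply/eqP; apply: (@rowfree_rinv _ _ _ _ ((1%:M : 'M[F]_rr) *t shmT F c n (n - c))).
by rewrite tensmx_mul mulmx1 shm_rinv ?tens11 // subnK.
Qed.

Section R.
Variable r : nat.

Definition X s : 'M[F]_(r * s) := jordan_block F r *t jordan_block F s - 1%:M.

Definition rho s k := \rank (X s ^+ k).

Lemma intertw1 a b (M : 'M[F]_(a, b)) : M *m Bsh F b = Bsh F a *m M ->
  (1%:M *t M) *m X b = X a *m (1%:M *t M).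
Proof.
move=> e; rewrite /X mulmxBr mulmxBl mulmx1 mul1mx !tensmx_mul mulmx1 mul1mx.
by rewrite !jbE mulmxDr mulmxDl mulmx1 mul1mx e.
Qed.

Lemma intertw a b (M : 'M[F]_(a, b)) k : M *m Bsh F b = Bsh F a *m M ->
  (1%:M *t M) *m X b ^+ k = X a ^+ k *m (1%:M *t M).
Proof.
move=> e; elim: k => [|k IH]; first by rewrite !expr0 mulmx1 mul1mx.
by rewrite !exprSr -!mulmxE mulmxA IH -!mulmxA intertw1.
Qed.

Lemma XqE p m s : p \in [pchar F] -> (r <= p ^ m)%N ->
  X s ^+ (p ^ m) = 1%:M *t (Bsh F s ^+ (p ^ m)).
Proof.
move=> hp hr.
have h1 : (1 + X s) ^+ (p ^ m) = 1 + X s ^+ (p ^ m) by apply: frob.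
have e : 1 + X s = jordan_block F r *t jordan_block F s.
  by rewrite /X addrC subrK.
rewrite e tens_pow !jbE !frob // !Bsh_pow (shm_big F _ _ _ hr) addr0 in h1.
rewrite tensmxDr tens11 in h1.
by apply: (addrI 1); rewrite Bsh_pow; exact: (esym h1).
Qed.

Lemma rho_mult p m s t : p \in [pchar F] -> (r <= p ^ m)%N ->
  rho s (p ^ m * t) = (r * (s - p ^ m * t))%N.
Proof.
move=> hp hr; rewrite /rho exprM XqE // tens_pow -exprM.
rewrite (_ : (1%:M : 'M[F]_r) ^+ t = 1%:M); last by rewrite expr1n.
by rewrite Bsh_pow rank_tens_shm.
Qed.

Lemma jcf_rank s lam : is_jcf_tens F r s lam ->
  forall k, rho s k = (\sum_i (lam i - k))%N.
Proof.
case=> _ _ [P [fP flP eP]] k.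
set D := \mxdiag_(i < r) jordan_block F (lam i) in eP.
have e1 : P *m X s = (D - 1%:M) *m P.
  by rewrite /X mulmxBr mulmxBl mulmx1 mul1mx eP.
have ek : P *m X s ^+ k = (D - 1%:M) ^+ k *m P.
  elim: k => [|k IH]; first by rewrite !expr0 mulmx1 mul1mx.
  by rewrite !exprSr -!mulmxE mulmxA IH -!mulmxA e1.
have eD : D - 1%:M = \mxdiag_(i < r) Bsh F (lam i).
  rewrite /D; under eq_mxdiag do rewrite jbE.
  by rewrite mxdiagD mxdiagZ addrC addKr.
rewrite /rho -(eqmxMfull _ flP) ek mxrankMfree // eD mxdiag_pow rank_mxdiag.
by apply: eq_bigr => i _; rewrite Bsh_pow rank_shm.
Qed.

End R.
End Mx2.

Section Win.
Variable f : nat -> nat.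

Lemma conv_gen : (forall j, f j.+1 + f j.+1 <= f j + f j.+2) ->
  forall i d, f (i + d) + f i.+1 <= f i + f (i + d).+1.
Proof.
move=> hc i; elim=> [|d IH]; first by rewrite addn0 addnC.
have := hc (i + d); rewrite addnS; lia.
Qed.

Lemma teleL a c : forall d, (forall j, a <= j < a + d -> f j.+1 + c <= f j) ->
  f (a + d) + c * d <= f a.
Proof.
elim=> [|d IH] h; first by rewrite addn0 muln0 addn0.
have h1 := IH (fun j hj => h j (ltac:(lia))).
have h2 := h (a + d) (ltac:(lia)).
rewrite addnS mulnS; lia.
Qed.

Lemma teleU a c : forall d, (forall j, a <= j < a + d -> f j <= f j.+1 + c) ->
  f a <= f (a + d) + c * d.
Proof.
elim=> [|d IH] h; first by rewrite addn0 muln0 addn0.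
have h1 := IH (fun j hj => h j (ltac:(lia))).
have h2 := h (a + d) (ltac:(lia)).
rewrite addnS mulnS; lia.
Qed.

Lemma window n q r : 0 < r -> 0 < q -> 2 * q <= n ->
  (forall j, f j.+1 + f j.+1 <= f j + f j.+2) ->
  f 0 = r * n -> f q = r * (n - q) -> f (n - q) = r * q -> f n = 0 ->
  forall j, j <= n -> f j = r * (n - j).
Proof.
move=> r0 q0 qn hc f0 fq fnq fn.
have cg := conv_gen hc.
have A0 : f (n - q).+1 + r <= f (n - q).
  case: (leqP (f (n - q).+1 + r) (f (n - q))) => // hlt.
  have hj : forall j, n - q <= j < n - q + q -> f j <= f j.+1 + (r - 1).
    move=> j /andP [j1 j2].
    have := cg (n - q) (j - (n - q)); rewrite subnKC //; lia.
  have := teleU (n - q) (r - 1) q hj.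
  rewrite (_ : n - q + q = n); last lia.
  rewrite fn fnq; nia.
have A : forall j, j < n - q + 1 -> f j.+1 + r <= f j.
  move=> j hj; have := cg j (n - q - j); rewrite subnKC; last lia.
  lia.
case: q q0 fq fnq A0 A qn => // q' _ fq fnq A0 A qn.
have B0 : f q' <= f q'.+1 + r.
  case: (leqP (f q') (f q'.+1 + r)) => // hlt.
  have := teleL 0 (r + 1) q'.+1.
  rewrite add0n => H.
  have {}H : f q'.+1 + (r + 1) * q'.+1 <= f 0.
    apply: H => j /andP [_ hj].
    have := cg j (q' - j); rewrite subnKC; last lia.
    lia.
  move: H; rewrite fq f0; nia.
have B : forall j, q' <= j -> f j <= f j.+1 + r.
  move=> j hj; have := cg q' (j - q'); rewrite subnKC //; lia.
move=> j hj.
case: (ltnP j q'.+1) => hjq.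
  have L1 := teleL j r (q'.+1 - j) (fun i hi => A i (ltac:(lia))).
  have U1 := teleL 0 r j (fun i hi => A i (ltac:(lia))).
  rewrite subnKC in L1; last lia.
  rewrite add0n in U1.
  move: L1 U1; rewrite fq f0; nia.
have L1 := teleU q'.+1 r (j - q'.+1) (fun i hi => B i (ltac:(lia))).
have U1 := teleU j r (n - j) (fun i hi => B i (ltac:(lia))).
rewrite subnKC in L1 => //.
rewrite subnKC in U1 => //.
move: L1 U1; rewrite fq fn; nia.
Qed.

End Win.


Section Main.
Variable F : fieldType.
Local Open Scope ring_scope.
Variable r : nat.
Local Notation rho := (rho F r).
Local Notation X := (X F r).

Lemma rho_conv n j : (rho n j.+1 + rho n j.+1 <= rho n j + rho n j.+2)%N.
Proof.
rewrite /rho.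
have h1 := mxrank_mul_ker (X n ^+ j) (X n).
have h2 := mxrank_mul_ker (X n ^+ j.+1) (X n).
rewrite mulmxE -exprSr in h1; rewrite mulmxE -exprSr in h2.
have h3 : (\rank (X n ^+ j.+1 :&: kermx (X n)) <= \rank (X n ^+ j :&: kermx (X n)))%N.
  apply: mxrankS; apply: capmxS => //; rewrite exprS -mulmxE; exact: submxMl.
move: h1 h2 h3; lia.
Qed.

Lemma per p m s k : p \in [pchar F] -> (r <= (p ^ m)%N)%N ->
  rho (p ^ m + s)%N (p ^ m + k)%N = rho s k.
Proof.
move=> hp hr; set q := (p ^ m)%N.
set E := (1%:M : 'M[F]_r) *t shm F q s (q + s)%N.
have iE : E *m X (q + s)%N ^+ k = X s ^+ k *m E.
  apply: intertw; rewrite /Bsh shm_mul ?leq_addr // shm_mul; last first.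
    by rewrite addnC leqnn.
  by rewrite (addnC q 1).
have fE : row_free E.
  apply: (@rowfree_rinv _ _ _ _ ((1%:M : 'M[F]_r) *t shmT F q (q + s)%N s)).
  by rewrite tensmx_mul mulmx1 shm_rinv ?tens11 // addnC.
have eE : (E :=: X (q + s)%N ^+ q)%MS.
  rewrite XqE // Bsh_pow; apply/eqmxP/andP; split.
    have -> : E = ((1%:M : 'M[F]_r) *t shm F 0 s (q + s)%N) *m
                  ((1%:M : 'M[F]_r) *t shm F q (q + s)%N (q + s)%N).
      by rewrite tensmx_mul mulmx1 shm_mul ?add0n // leq_addr.
    exact: submxMl.
  have -> : (1%:M : 'M[F]_r) *t shm F q (q + s)%N (q + s)%N =
            ((1%:M : 'M[F]_r) *t shm F 0 (q + s)%N s) *m E.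
    by rewrite tensmx_mul mulmx1 shm_mul ?add0n // addnC leqnn.
  exact: submxMl.
rewrite /rho -(mxrankMfree _ fE) -iE (eqmxMr _ eE).
by rewrite exprD mulmxE.
Qed.


Lemma free_n p m n : p \in [pchar F] -> (r <= p ^ m)%N -> (0 < r)%N ->
  (p ^ m %| n)%N -> (2 * p ^ m <= n)%N ->
  forall j, (j <= n)%N -> rho n j = (r * (n - j))%N.
Proof.
move=> hp hr r0 dn hn.
have pp : prime p by apply: (pcharf_prime hp).
have q0 : (0 < p ^ m)%N by rewrite expn_gt0 prime_gt0.
apply: (@window (rho n) n (p ^ m)%N r r0 q0 hn (rho_conv n)).
- by have := rho_mult F r p m n 0 hp hr; rewrite muln0 subn0.
- by have := rho_mult F r p m n 1 hp hr; rewrite muln1.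
- have := rho_mult F r p m n (n %/ p ^ m - 1) hp hr.
  rewrite mulnBr muln1 mulnC divnK // => ->; congr (_ * _)%N.
  move: hn; clear; lia.
- have := rho_mult F r p m n (n %/ p ^ m) hp hr.
  by rewrite mulnC divnK // subnn muln0.
Qed.

Lemma dual p m s s2 k : p \in [pchar F] -> (r <= p ^ m)%N -> (0 < r)%N ->
  (p ^ m %| s + s2)%N -> (2 * p ^ m <= s + s2)%N -> (k <= s + s2)%N ->
  (rho s (s + s2 - k) + r * s2 = r * k + rho s2 k)%N.
Proof.
move=> hp hr r0 dn hn hk.
set n := (s + s2)%N in dn hn hk *.
have fr := free_n p m n hp hr r0 dn hn.
have Xn0 : X n ^+ n = 0.
  apply/eqP; rewrite -mxrank_eq0; have := fr n (leqnn n); rewrite /rho => ->.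
  by rewrite subnn muln0.
have sub : (X n ^+ (n - k) <= kermx (X n ^+ k))%MS.
  by apply/sub_kermxP; rewrite mulmxE -exprD subnK.
have K : (kermx (X n ^+ k) :=: X n ^+ (n - k))%MS.
  apply/eqmxP/andP; split => //.
  rewrite -(mxrank_leqif_sup sub).2 mxrank_ker.
  have := fr k hk; have := fr (n - k)%N (leq_subr _ _); rewrite /rho => -> ->.
  apply/eqP; rewrite subKn //; move: hk; clear; nia.
set E := (1%:M : 'M[F]_r) *t shm F s s2 n.
have fE : row_free E.
  apply: (@rowfree_rinv _ _ _ _ ((1%:M : 'M[F]_r) *t shmT F s n s2)).
  by rewrite tensmx_mul mulmx1 shm_rinv ?tens11 // /n addnC.
have iE : E *m X n ^+ k = X s2 ^+ k *m E.
  apply: intertw; rewrite /Bsh shm_mul ?leq_addr // shm_mul; last first.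
    by rewrite /n addnC leqnn.
  by rewrite (addnC s 1).
set T := (1%:M : 'M[F]_r) *t shm F 0 n s.
have iT : T *m X s ^+ (n - k) = X n ^+ (n - k) *m T.
  apply: intertw; rewrite /Bsh shm_mul ?leq_addr // shm_mul //.
  by rewrite addn0 /n leq_addr.
have fT : row_full T.
  apply: (@rowfull_linv _ _ _ _ ((1%:M : 'M[F]_r) *t shm F 0 s n)).
  by rewrite tensmx_mul mulmx1 shm_linv ?tens11 // /n leq_addr.
have rT : \rank T = (r * s)%N by apply/eqP.
have ET : (E :=: kermx T)%MS.
  have subE : (E <= kermx T)%MS.
    apply/sub_kermxP; rewrite tensmx_mul mulmx1 shm_mul; last first.
      by rewrite addn0 /n leq_addr.
    by rewrite addn0 shm_big // tensmx0.
  apply/eqmxP/andP; split => //.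
  rewrite -(mxrank_leqif_sup subE).2 mxrank_ker rT.
  rewrite (eqP fE) /n mulnDr; apply/eqP; move: (r * s)%N (r * s2)%N; clear; lia.
have h1 := mxrank_mul_ker (X n ^+ (n - k)) T.
have h2 := mxrank_mul_ker E (X n ^+ k).
rewrite -iT (eqmxMfull _ fT) in h1.
rewrite iE (mxrankMfree _ fE) (eqP fE) in h2.
have h5 : \rank (X n ^+ (n - k) :&: kermx T) = \rank (E :&: kermx (X n ^+ k)).
  by rewrite capmxC (cap_eqmx ET K).
rewrite h5 in h1.
have := fr (n - k)%N (leq_subr _ _); rewrite /rho in h1 * => e.
rewrite e in h1; rewrite /rho.
move: h1 h2; rewrite subKn //; lia.
Qed.

End Main.

Section Comb.
Variable r : nat.
Implicit Types x y : 'I_r -> nat.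

Definition G x k := (\sum_i (x i - k))%N.
Definition C x k := (\sum_i (k < x i))%N.
Definition noninc x := forall i j : 'I_r, i <= j -> x j <= x i.

Lemma sum_const_ord c : (\sum_(i < r) c = r * c)%N.
Proof. by rewrite big_const_ord iter_addn_0 mulnC. Qed.

Lemma G_C x k : G x k = (G x k.+1 + C x k)%N.
Proof.
rewrite /G /C -big_split /=; apply: eq_bigr => i _; lia.
Qed.

Lemma sum_sub_id x c : (G x c + r * c = \sum_i x i + \sum_i (c - x i))%N.
Proof.
rewrite /G -sum_const_ord -!big_split /=; apply: eq_bigr => i _; lia.
Qed.

Lemma sum0_each (f : 'I_r -> nat) : (\sum_i f i = 0)%N -> forall i, f i = 0%N.
Proof.
move=> h i; move: h; rewrite (bigD1 i) //=; lia.
Qed.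

Lemma notlt x y : noninc x -> noninc y -> (forall k, C x k = C y k) ->
  forall i, ~ (x i < y i).
Proof.
move=> nx ny hc i hlt.
have := hc (x i); rewrite /C (bigD1 i) //= [in RHS](bigD1 i) //= ltnn hlt add0n.
have h1 : (\sum_(j < r | j != i) (x i < x j) <= \sum_(j < r | j != i) (j < i))%N.
  apply: leq_sum => j nji.
  case: (ltnP (x i) (x j)) => //= h; case: (ltnP j i) => //= h2.
  by have := nx _ _ h2; lia.
have h2 : (\sum_(j < r | j != i) (j < i) <= \sum_(j < r | j != i) (x i < y j))%N.
  apply: leq_sum => j nji.
  case: (ltnP j i) => //= h; have := ny _ _ (ltnW h); lia.
rewrite (_ : nat_of_bool true = 1%N) // => e.
rewrite e in h1.
by have := leq_trans h1 h2; rewrite add1n ltnn.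
Qed.

Lemma from_G x y : noninc x -> noninc y -> (forall k, G x k = G y k) ->
  forall i, x i = y i.
Proof.
move=> nx ny hg.
have hc : forall k, C x k = C y k.
  move=> k; have := G_C x k; have := G_C y k; rewrite (hg k) (hg k.+1); lia.
move=> i; have := @notlt x y nx ny hc i; have := @notlt y x ny nx (fun k => esym (hc k)) i.
lia.
Qed.

End Comb.
Arguments G {r}.
Arguments C {r}.
Arguments noninc {r}.
Arguments sum_sub_id {r}.
Arguments sum0_each {r f}.
Arguments from_G {r x y}.
Arguments notlt {r}.

Arguments jcf_rank {F r s lam}.
Section Final.
Variable F : fieldType.
Variable r : nat.

Lemma jcf_noninc {s lam} : is_jcf_tens F r s lam -> noninc lam.
Proof. by case=> h _ _. Qed.

Lemma rho0 s : rho F r s 0 = (r * s)%N.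
Proof. by rewrite /rho GRing.expr0 mxrank1. Qed.

Lemma sum_lam {s lam} : is_jcf_tens F r s lam -> (\sum_i lam i = r * s)%N.
Proof.
move=> h; rewrite -rho0 (jcf_rank h 0); apply: eq_bigr => i _; by rewrite subn0.
Qed.

Lemma per_iter p m : p \in [pchar F]%R -> (r <= p ^ m)%N ->
  forall t s k, rho F r (p ^ m * t + s) (p ^ m * t + k) = rho F r s k.
Proof.
move=> hp hr; elim=> [|t IH] s k; first by rewrite muln0 !add0n.
by rewrite mulnS -!addnA per // IH.
Qed.

Lemma partA p m s t lam lam' : p \in [pchar F]%R -> (r <= p ^ m)%N ->
  is_jcf_tens F r s lam -> is_jcf_tens F r (p ^ m * t + s) lam' ->
  forall i, lam' i = (lam i + p ^ m * t)%N.
Proof.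
move=> hp hr h h'; set d := (p ^ m * t)%N.
have eG : forall k, G lam' (d + k) = G lam k.
  move=> k; rewrite /G -(jcf_rank h) -(jcf_rank h') per_iter //.
have s1 := sum_lam h; have s2 := sum_lam h'.
have ge : forall i, d <= lam' i.
  have := sum_sub_id lam' d; rewrite -[d]addn0 eG addn0 /G.
  under eq_bigr do rewrite subn0.
  rewrite s1 s2 => e.
  have e2 : (\sum_i (d - lam' i) = 0)%N by move: e; rewrite mulnDr; lia.
  move=> i; have := sum0_each e2 i; lia.
apply: (from_G (jcf_noninc h')).
  by move=> i j hij; have := jcf_noninc h _ _ hij; lia.
move=> K; case: (leqP d K) => hK.
  rewrite -(subnKC hK) eG /G; apply: eq_bigr => i _; lia.
have e1 : G lam' K = (G lam' d + r * (d - K))%N.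
  rewrite /G -sum_const_ord -big_split; apply: eq_bigr => i _ /=.
  have := ge i; lia.
rewrite e1 -[d]addn0 eG /G -sum_const_ord -big_split; apply: eq_bigr => i _ /=.
lia.
Qed.

Lemma partB p m s s' lam lam' : p \in [pchar F]%R -> (r <= p ^ m)%N -> (0 < r)%N ->
  (p ^ m %| s + s')%N -> (0 < s + s')%N ->
  is_jcf_tens F r s lam -> is_jcf_tens F r s' lam' ->
  forall i, lam' i = (s + s' - lam (rev_ord i))%N /\ (lam (rev_ord i) <= s + s')%N.
Proof.
move=> hp hr r0 dv pos h h'.
set q := (p ^ m)%N in hr dv.
set N := (s + s')%N in dv pos *.
have qN : q <= N by apply: dvdn_leq.
have D : forall j, j <= N -> (rho F r s (N - j) + r * s' = r * j + rho F r s' j)%N.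
  move=> j hj.
  have := dual F r p m s (q + s') (q + j) hp hr r0.
  rewrite (_ : (s + (q + s'))%N = (q + N)%N); last by rewrite /N; lia.
  rewrite dvdn_addr ?dvdnn // => H.
  have {H} := H dv (ltac:(lia)) (ltac:(lia)).
  rewrite per // (_ : (q + N - (q + j))%N = (N - j)%N); last lia.
  rewrite !mulnDr; lia.
have s1 := sum_lam h; have s2 := sum_lam h'.
have DG : forall j, j <= N -> (G lam (N - j) + r * s' = r * j + G lam' j)%N.
  by move=> j hj; rewrite /G -(jcf_rank h) -(jcf_rank h') D.
have le1 : forall i, lam i <= N.
  have := DG 0 (leq0n _); rewrite subn0 muln0 add0n /G.
  under [X in _ = X -> _]eq_bigr do rewrite subn0.
  rewrite s2 => e; have e2 : (\sum_i (lam i - N) = 0)%N by lia.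
  by move=> i; have := sum0_each e2 i; lia.
have le2 : forall i, lam' i <= N.
  have := DG N (leqnn _); rewrite subnn /G.
  under eq_bigr do rewrite subn0.
  rewrite s1 /N mulnDr => e; have e2 : (\sum_i (lam' i - (s + s')) = 0)%N by lia.
  by move=> i; have := sum0_each e2 i; lia.
suff E : forall i, lam' i = (N - lam (rev_ord i))%N.
  by move=> i; split; [exact: E | exact: le1].
apply: (from_G (jcf_noninc h')).
  move=> i j hij.
  have hr' : rev_ord j <= rev_ord i.
    rewrite /=; have := ltn_ord i; have := ltn_ord j; lia.
  have := jcf_noninc h _ _ hr'; lia.
move=> K; case: (leqP K N) => hK; last first.
  rewrite /G !big1 // => i _; [have := le1 (rev_ord i) | have := le2 i]; lia.
have eY : G (fun i => N - lam (rev_ord i))%N K = (\sum_i ((N - K) - lam i))%N.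
  rewrite /G (reindex_inj rev_ord_inj) /=; apply: eq_bigr => i _.
  rewrite rev_ordK; lia.
rewrite eY.
have := sum_sub_id lam (N - K); rewrite s1 => e3.
have := DG K hK => e4.
have e5 : (r * (N - K) + r * K = r * s + r * s')%N.
  by rewrite -mulnDr subnK // /N mulnDr.
lia.
Qed.

End Final.

Local Open Scope ring_scope.

Theorem theorem4 (p m r s s' : nat) (F : fieldType) :
  prime p -> p \in [pchar F] ->
  (0 < r)%N -> (0 < s)%N -> (0 < s')%N ->
  (r <= s)%N -> (r <= s')%N -> (r <= p ^ m)%N ->
  forall (lam lam' : 'I_r -> nat),
    is_jcf_tens F r s lam -> is_jcf_tens F r s' lam' ->
    ((s == s' %[mod p ^ m])%N ->
       forall i : 'I_r, deviation r s' lam' i = deviation r s lam i)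
    /\
    ((s' + s == 0 %[mod p ^ m])%N ->
       forall i : 'I_r, deviation r s' lam' i = - deviation r s lam (rev_ord i)).
Proof.
move=> pp hp r0 s0 s'0 rs rs' rq lam lam' h h'; split.
  move=> hmod i; rewrite /deviation.
  case: (leqP s s') => hss.
    have dv : (p ^ m %| s' - s)%N by rewrite -eqn_mod_dvd // eq_sym.
    set t := ((s' - s) %/ p ^ m)%N.
    have es : s' = (p ^ m * t + s)%N by rewrite mulnC divnK // subnK.
    have h2 : is_jcf_tens F r (p ^ m * t + s) lam' by rewrite -es.
    rewrite (partA F r p m s t lam lam' hp rq h h2 i) es; lia.
  have dv : (p ^ m %| s - s')%N by rewrite -eqn_mod_dvd // ltnW.
  set t := ((s - s') %/ p ^ m)%N.
  have es : s = (p ^ m * t + s')%N by rewrite mulnC divnK // subnK // ltnW.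
  have h2 : is_jcf_tens F r (p ^ m * t + s') lam by rewrite -es.
  rewrite (partA F r p m s' t lam' lam hp rq h' h2 i) es; lia.
move=> hmod i; rewrite /deviation.
have dv : (p ^ m %| s + s')%N by rewrite /dvdn addnC; rewrite mod0n in hmod.
have [e le] := partB F r p m s s' lam lam' hp rq r0 dv (ltn_addr _ s0) h h' i.
rewrite e; lia.
Qed.
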